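(* Let $D\subseteq\mathbb{R}^n$ be nonempty, convex, closed and bounded, and let $f:\mathbb{R}^n\to\mathbb{R}$ be continuously differentiable. Then in Method (CGMIS) (described in the context), the number of iterations (changes of the index $k$) at each stage $p$ is finite; i.e., for every $p$ the restart condition $\mu(x^k)<\delta_p$ is reached after finitely many iterations.
   Context: Notation: $f'(x)$ is the gradient of $f$; $\mu(x)=\max_{y\in D}\langle f'(x),x-y\rangle$. Method (CGMIS): Choose $w^0\in D$, $\beta\in(0,1)$, and a positive sequence $\{\delta_p\}$ with $\delta_p\to0$. Set $p=1$. (Step 0) Choose a sequence of numbers $\tau_{l,p}\in(0,1)$, $l=0,1,\dots$, with $\tau_{l,p}\to0$ as $l\to\infty$; set $k=0$, $l=0$, $x^0=w^{p-1}$, and choose $\lambda_0\in(0,\tau_{0,p}]$. (Step 1) If $\mu(x^k)<\delta_p$, set $w^p=x^k$, replace $p$ by $p+1$ and go to Step 0 (restart). Otherwise choose any $z^k\in D$ with $\langle f'(x^k),x^k-z^k\rangle\ge\delta_p$. (Step 2) Set $d^k=z^k-x^k$, $x^{k+1}=x^k+\lambda_k d^k$. If $f(x^{k+1})\le f(x^k)+\beta\lambda_k\langle f'(x^k),d^k\rangle$, choose any $\lambda_{k+1}\in[\lambda_k,\tau_{l,p}]$ (with $l$ unchanged). Otherwise set $\lambda'_{k+1}=\min\{\lambda_k,\tau_{l+1,p}\}$, replace $l$ by $l+1$, and choose any $\lambda_{k+1}\in(0,\lambda'_{k+1}]$. Set $k=k+1$ and go to Step 1. The iterations with a fixed value of $p$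 form stage $p$. *)

(* Defs.v *)
From Stdlib Require Fin.
From Stdlib Require Import Reals Lra ClassicalEpsilon.
Open Scope R_scope.

Definition vec (n : nat) := Fin.t n -> R.

Fixpoint dot (n : nat) : vec n -> vec n -> R :=
  match n return vec n -> vec n -> R with
  | O => fun _ _ => 0
  | S m => fun x y =>
      x Fin.F1 * y Fin.F1 + dot m (fun i => x (Fin.FS i)) (fun i => y (Fin.FS i))
  end.
Arguments dot {n} x y.

Definition vadd {n} (x y : vec n) : vec n := fun i => x i + y i.
Definition vsub {n} (x y : vec n) : vec n := fun i => x i - y i.
Definition vscale {n} (a : R) (x : vec n) : vec n := fun i => a * x i.
Definition vnorm {n} (x : vec n) : R := sqrt (dot x x).

Definition set_nonempty {n} (D : vec n -> Prop) : Prop := exists x, D x.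
Definition set_convex {n} (D : vec n -> Prop) : Prop :=
  forall x y t, D x -> D y -> 0 <= t <= 1 ->
    D (vadd (vscale (1 - t) x) (vscale t y)).
Definition set_closed {n} (D : vec n -> Prop) : Prop :=
  forall x, (forall eps, 0 < eps -> exists y, D y /\ vnorm (vsub y x) < eps) -> D x.
Definition set_bounded {n} (D : vec n -> Prop) : Prop :=
  exists M, forall x, D x -> vnorm x <= M.

Definition has_gradient {n} (f : vec n -> R) (x g : vec n) : Prop :=
  forall eps, 0 < eps -> exists del, 0 < del /\
    forall y, vnorm (vsub y x) < del ->
      Rabs (f y - f x - dot g (vsub y x)) <= eps * vnorm (vsub y x).

Definition vcontinuous {n} (F : vec n -> vec n) : Prop :=
  forall x eps, 0 < eps -> exists del, 0 < del /\
    forall y, vnorm (vsub y x) < del -> vnorm (vsub (F y) (F x)) < eps.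

Definition C1_with_gradient {n} (f : vec n -> R) (f' : vec n -> vec n) : Prop :=
  (forall x, has_gradient f x (f' x)) /\ vcontinuous f'.

(* mu(x) = max_{y in D} <f'(x), x - y>  (the max exists when D is set_nonempty
   and compact; the default value 0 is never used under the hypotheses). *)
Definition is_max_gap {n} (D : vec n -> Prop) (f' : vec n -> vec n) (x : vec n)
  (m : R) : Prop :=
  (exists y, D y /\ m = dot (f' x) (vsub x y)) /\
  (forall y, D y -> dot (f' x) (vsub x y) <= m).

Definition mu {n} (D : vec n -> Prop) (f' : vec n -> vec n) (x : vec n) : R :=
  epsilon (inhabits 0) (is_max_gap D f' x).

(* Main.v *)
Require Import Defs.
From Stdlib Require Import Reals Lra Lia FunctionalExtensionality ClassicalEpsilon Classical.
Open Scope R_scope.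

Lemma dot_comm n (u v : vec n) : dot u v = dot v u.
Proof. induction n; simpl; [ring|]. rewrite IHn. ring. Qed.

Lemma dot_add_l n (u v w : vec n) : dot (vadd u v) w = dot u w + dot v w.
Proof. induction n; simpl; [ring|]. unfold vadd in *. rewrite IHn. ring. Qed.

Lemma dot_scale_l n a (u w : vec n) : dot (vscale a u) w = a * dot u w.
Proof. induction n; simpl; [ring|]. unfold vscale in *. rewrite IHn. ring. Qed.

Lemma dot_scale_r n a (u w : vec n) : dot w (vscale a u) = a * dot w u.
Proof. rewrite dot_comm, dot_scale_l, dot_comm. ring. Qed.

Lemma dot_add_r n (u v w : vec n) : dot w (vadd u v) = dot w u + dot w v.
Proof. rewrite dot_comm, dot_add_l, (dot_comm _ u), (dot_comm _ v). ring. Qed.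

Lemma vsub_eq n (u v : vec n) : vsub u v = vadd u (vscale (-1) v).
Proof. apply functional_extensionality; intro i; unfold vsub, vadd, vscale; ring. Qed.

Lemma dot_sub_l n (u v w : vec n) : dot (vsub u v) w = dot u w - dot v w.
Proof. rewrite vsub_eq, dot_add_l, dot_scale_l. ring. Qed.

Lemma dot_sub_r n (u v w : vec n) : dot w (vsub u v) = dot w u - dot w v.
Proof. rewrite dot_comm, dot_sub_l, (dot_comm _ u), (dot_comm _ v). ring. Qed.

Lemma dot_nonneg n (u : vec n) : 0 <= dot u u.
Proof. induction n; simpl; [lra|]. specialize (IHn (fun i => u (Fin.FS i))). nra. Qed.

Lemma dot_sq_vnorm n (u : vec n) : dot u u = vnorm u * vnorm u.
Proof. unfold vnorm. rewrite sqrt_sqrt; auto using dot_nonneg. Qed.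

Lemma vnorm_nonneg n (u : vec n) : 0 <= vnorm u.
Proof. apply sqrt_pos. Qed.

Lemma dot_amgm n (u v : vec n) a : 0 < a -> 2 * a * Rabs (dot u v) <= a * a * dot v v + dot u u.
Proof.
  intro Ha.
  assert (H1 := dot_nonneg n (vsub (vscale a v) u)).
  assert (H2 := dot_nonneg n (vadd (vscale a v) u)).
  rewrite !dot_sub_l, !dot_sub_r, !dot_scale_l, !dot_scale_r in H1.
  rewrite !dot_add_l, !dot_add_r, !dot_scale_l, !dot_scale_r in H2.
  rewrite (dot_comm _ v u) in H1, H2.
  unfold Rabs; destruct (Rcase_abs (dot u v)); nra.
Qed.

Lemma cs_bound n (u v : vec n) e M : 0 < e -> 0 < M -> vnorm u <= e -> vnorm v <= M ->
  Rabs (dot u v) <= e * M.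
Proof.
  intros He HM Hu Hv.
  assert (Hu0 := vnorm_nonneg n u). assert (Hv0 := vnorm_nonneg n v).
  assert (H := dot_amgm n u v (e / M) ltac:(apply Rdiv_lt_0_compat; lra)).
  rewrite !dot_sq_vnorm in H.
  assert (Huu : vnorm u * vnorm u <= e * e) by nra.
  assert (Hvv : vnorm v * vnorm v <= M * M) by nra.
  assert (HeM: e / M * M = e) by (field; lra).
  assert (0 < e / M) by (apply Rdiv_lt_0_compat; lra).
  assert (2 * (e/M) * Rabs (dot u v) <= 2 * (e / M) * (e * M)).
  { eapply Rle_trans; [exact H|].
    replace (2 * (e/M) * (e*M)) with ((e/M)*(e/M)*(M*M) + e*e) by (field; lra).
    apply Rplus_le_compat; [apply Rmult_le_compat_l; nra | lra]. }
  nra.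
Qed.

Lemma vnorm_scale n a (v : vec n) : vnorm (vscale a v) = Rabs a * vnorm v.
Proof.
  unfold vnorm. rewrite dot_scale_l, dot_scale_r.
  replace (a * (a * dot v v)) with ((Rabs a * Rabs a) * dot v v).
  - rewrite sqrt_mult; [| nra | apply dot_nonneg]. rewrite sqrt_square; auto using Rabs_pos.
  - rewrite <- Rabs_mult, Rabs_right; [ring|]. nra.
Qed.

Lemma vnorm_lt_sq n (u : vec n) e : 0 < e -> dot u u < e * e -> vnorm u < e.
Proof.
  intros He H. rewrite dot_sq_vnorm in H. assert (H0:= vnorm_nonneg n u). nra.
Qed.

Lemma weak_tri n (u v : vec n) e : vnorm u < e -> vnorm v < e -> vnorm (vadd u v) < 2 * e.
Proof.
  intros Hu Hv. assert (Hu0 := vnorm_nonneg n u). assert (Hv0 := vnorm_nonneg n v).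
  apply vnorm_lt_sq; [lra|].
  rewrite dot_add_l, !dot_add_r, (dot_comm _ v u).
  assert (H := dot_amgm n u v 1 ltac:(lra)). rewrite !dot_sq_vnorm in *.
  assert (dot u v <= Rabs (dot u v)) by apply Rle_abs.
  nra.
Qed.

Lemma vnorm_neg n (u v : vec n) : vnorm (vsub u v) = vnorm (vsub v u).
Proof.
  replace (vsub u v) with (vscale (-1) (vsub v u)).
  - rewrite vnorm_scale, Rabs_left by lra. ring.
  - apply functional_extensionality; intro i; unfold vsub, vscale; ring.
Qed.

Lemma choice' {A B : Type} (P : A -> B -> Prop) :
  (forall a, exists b, P a b) -> exists g, forall a, P a (g a).
Proof.
  intro H. exists (fun a => proj1_sig (constructive_indefinite_description _ (H a))).
  intro a. exact (proj2_sig (constructive_indefinite_description _ (H a))).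
Qed.

Lemma coord_le n (w : vec n) i : w i * w i <= dot w w.
Proof.
  induction n.
  - apply (Fin.case0 (fun i => w i * w i <= dot w w) i).
  - apply (Fin.caseS' i (fun i => w i * w i <= dot w w)).
    + simpl. assert (H := dot_nonneg n (fun i => w (Fin.FS i))). lra.
    + intro p. simpl. specialize (IHn (fun i => w (Fin.FS i)) p). simpl in IHn.
      assert (0 <= w Fin.F1 * w Fin.F1) by nra. lra.
Qed.

Lemma coord_bound n (w : vec n) i M : vnorm w <= M -> Rabs (w i) <= M.
Proof.
  intro H. assert (H1 := coord_le n w i). rewrite dot_sq_vnorm in H1.
  assert (H0 := vnorm_nonneg n w).
  assert (vnorm w * vnorm w <= M * M) by (apply Rmult_le_compat; lra).
  assert (Rabs (w i) * Rabs (w i) <= M * M).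
  { rewrite <- Rabs_mult, Rabs_right by nra. lra. }
  assert (0 <= Rabs (w i)) by apply Rabs_pos. nra.
Qed.

Lemma smono_lt (phi : nat -> nat) : (forall k, (phi k < phi (S k))%nat) ->
  forall a b, (a < b)%nat -> (phi a < phi b)%nat.
Proof.
  intros H a b Hab. induction Hab.
  - apply H.
  - specialize (H m). lia.
Qed.

Lemma smono_ge (phi : nat -> nat) : (forall k, (phi k < phi (S k))%nat) ->
  forall k, (k <= phi k)%nat.
Proof. intros H k. induction k; [lia|]. specialize (H k). lia. Qed.

Lemma subseq_cv (v : nat -> R) l psi : Un_cv v l -> (forall k, (k <= psi k)%nat) ->
  Un_cv (fun k => v (psi k)) l.
Proof.
  intros H Hp eps He. destruct (H eps He) as [N HN]. exists N. intros k Hk.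
  apply HN. specialize (Hp k). lia.
Qed.

Lemma small_inv eps : 0 < eps -> exists N, forall k, (N <= k)%nat -> 1 / (INR k + 1) < eps.
Proof.
  intro He. destruct (INR_archimed eps 1 He) as [N HN]. exists N. intros k Hk.
  apply le_INR in Hk. assert (0 <= INR N) by apply pos_INR.
  apply (Rmult_lt_reg_r (INR k + 1)); [lra|].
  unfold Rdiv. rewrite Rmult_1_l, Rinv_l by lra. nra.
Qed.

Lemma bw1 (u : nat -> R) M : (forall k, Rabs (u k) <= M) ->
  exists phi l, (forall k, (phi k < phi (S k))%nat) /\ Un_cv (fun k => u (phi k)) l.
Proof.
  intro HM.
  destruct (Bolzano_Weierstrass u (fun c => -M <= c <= M) (compact_P3 (-M) M)) as [l Hl].
  { intro k. specialize (HM k). unfold Rabs in HM; destruct (Rcase_abs (u k)); lra. }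
  assert (Hc : forall kN : nat * nat, exists p, (snd kN <= p)%nat /\ Rabs (u p - l) < 1 / (INR (fst kN) + 1)).
  { intros [k N]. simpl.
    assert (Hpos : 0 < 1 / (INR k + 1)).
    { apply Rdiv_lt_0_compat; [lra|]. assert (0 <= INR k) by apply pos_INR. lra. }
    destruct (Hl (fun y => Rabs (y - l) < 1 / (INR k + 1)) N) as [p [Hp1 Hp2]].
    - exists (mkposreal _ Hpos). intros y Hy. exact Hy.
    - exists p. split; assumption. }
  destruct (choice' _ Hc) as [c Hcc].
  set (phi := fix phi k := match k with O => c (O, O) | S k => c (S k, S (phi k)) end).
  assert (Hphi : forall k, (phi k < phi (S k))%nat).
  { intro k. simpl. specialize (Hcc (S k, S (phi k))). simpl in Hcc. lia. }
  assert (Hd : forall k, Rabs (u (phi k) - l) < 1 / (INR k + 1)).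
  { intro k. destruct k.
    - specialize (Hcc (O, O)). exact (proj2 Hcc).
    - specialize (Hcc (S k, S (phi k))). exact (proj2 Hcc). }
  exists phi, l. split; [exact Hphi|].
  intros eps He. destruct (small_inv eps He) as [N HN]. exists N. intros k Hk.
  unfold R_dist. specialize (Hd k). specialize (HN k Hk). lra.
Qed.

Lemma bwn n : forall (u : nat -> vec n) M, (forall k i, Rabs (u k i) <= M) ->
  exists phi y, (forall k, (phi k < phi (S k))%nat) /\
    Un_cv (fun k => dot (vsub (u (phi k)) y) (vsub (u (phi k)) y)) 0.
Proof.
  induction n; intros u M HM.
  - exists (fun k => k), (fun _ => 0). split; [intro; lia|].
    intros eps He. exists O. intros. simpl. unfold R_dist. rewrite Rminus_0_r, Rabs_R0. exact He.
  - destruct (bw1 (fun k => u k Fin.F1) M (fun k => HM k Fin.F1)) as [phi1 [l [Hp1 Hc1]]].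
    destruct (IHn (fun k i => u (phi1 k) (Fin.FS i)) M (fun k i => HM (phi1 k) (Fin.FS i)))
      as [phi2 [y' [Hp2 Hc2]]].
    exists (fun k => phi1 (phi2 k)), (fun i => Fin.caseS' i (fun _ => R) l y').
    split.
    + intro k. apply smono_lt; auto.
    + simpl. unfold vsub at 1 2. simpl.
      replace 0 with ((l - l) * (l - l) + 0) by ring.
      apply CV_plus; [| exact Hc2].
      assert (Hs := subseq_cv _ _ _ Hc1 (smono_ge _ Hp2)). simpl in Hs.
      assert (Hm : Un_cv (fun k => u (phi1 (phi2 k)) Fin.F1 - l) (l - l)).
      { apply CV_minus; [exact Hs|]. intros eps He; exists O; intros; unfold R_dist.
        rewrite Rminus_eq_0, Rabs_R0; exact He. }
      apply CV_mult; exact Hm.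
Qed.

Lemma bw_vnorm n (u : nat -> vec n) M : (forall k, vnorm (u k) <= M) ->
  exists phi y, (forall k, (phi k < phi (S k))%nat) /\
    forall eps, 0 < eps -> exists N, forall k, (N <= k)%nat -> vnorm (vsub (u (phi k)) y) < eps.
Proof.
  intro HM. destruct (bwn n u M (fun k i => coord_bound n (u k) i M (HM k))) as [phi [y [Hp Hc]]].
  exists phi, y. split; [exact Hp|]. intros eps He.
  destruct (Hc (eps * eps) ltac:(nra)) as [N HN]. exists N. intros k Hk.
  apply vnorm_lt_sq; [exact He|]. specialize (HN k Hk). unfold R_dist in HN.
  rewrite Rminus_0_r in HN. eapply Rle_lt_trans; [apply Rle_abs| exact HN].
Qed.

Lemma inv_mono a b : (a <= b)%nat -> 1 / (INR b + 1) <= 1 / (INR a + 1).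
Proof.
  intro H. apply le_INR in H. assert (0 <= INR a) by apply pos_INR.
  unfold Rdiv; rewrite !Rmult_1_l. apply Rinv_le_contravar; lra.
Qed.

Lemma vsplit n (a b c : vec n) : vsub a b = vadd (vsub a c) (vsub c b).
Proof. apply functional_extensionality; intro i; unfold vsub, vadd; ring. Qed.

Lemma unif_cont n (D : vec n -> Prop) (F : vec n -> vec n) M :
  (forall a, D a -> vnorm a <= M) -> vcontinuous F ->
  forall eps, 0 < eps -> exists eta, 0 < eta /\
    forall a b, D a -> D b -> vnorm (vsub a b) < eta -> vnorm (vsub (F a) (F b)) < eps.
Proof.
  intros HM HF eps He. apply NNPP; intro Hn.
  assert (Hk : forall k, exists p : vec n * vec n, D (fst p) /\ D (snd p) /\
     vnorm (vsub (fst p) (snd p)) < 1 / (INR k + 1) /\ ~ (vnorm (vsub (F (fst p)) (F (snd p))) < eps)).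
  { intro k. apply NNPP; intro Hk. apply Hn. exists (1 / (INR k + 1)). split.
    { apply Rdiv_lt_0_compat; [lra|]. assert (0 <= INR k) by apply pos_INR. lra. }
    intros a b Da Db Hab. apply NNPP; intro Hf. apply Hk. exists (a, b); simpl; auto. }
  destruct (choice' _ Hk) as [g Hg].
  destruct (bw_vnorm n (fun k => fst (g k)) M (fun k => HM _ (proj1 (Hg k)))) as [phi [y [Hp Hc]]].
  destruct (HF y (eps / 2) ltac:(lra)) as [del [Hdel Hd]].
  destruct (Hc (del / 2) ltac:(lra)) as [N1 HN1].
  destruct (small_inv (del / 2) ltac:(lra)) as [N2 HN2].
  set (k := max N1 N2).
  specialize (HN1 k ltac:(unfold k; lia)). specialize (HN2 k ltac:(unfold k; lia)).
  destruct (Hg (phi k)) as [Da [Db [Hab Hnf]]].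
  set (a := fst (g (phi k))) in *. set (b := snd (g (phi k))) in *.
  assert (Hba : vnorm (vsub b a) < del / 2).
  { rewrite vnorm_neg. eapply Rlt_le_trans; [exact Hab|].
    eapply Rle_trans; [apply inv_mono, (smono_ge _ Hp)|]. lra. }
  assert (Hby : vnorm (vsub b y) < del).
  { rewrite (vsplit _ b y a). replace del with (2 * (del / 2)) by field. apply weak_tri; assumption. }
  assert (Hay : vnorm (vsub a y) < del) by lra.
  apply Hnf. rewrite (vsplit _ (F a) (F b) (F y)). replace eps with (2 * (eps / 2)) by field.
  apply weak_tri. apply Hd; exact Hay. rewrite vnorm_neg. apply Hd; exact Hby.
Qed.

Lemma lower_bound n (D : vec n -> Prop) f f' M :
  (forall a, D a -> vnorm a <= M) -> C1_with_gradient f f' ->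
  exists m, forall a, D a -> m <= f a.
Proof.
  intros HM [Hg _]. apply NNPP; intro Hn.
  assert (Hk : forall k, exists a, D a /\ f a < - INR k).
  { intro k. apply NNPP; intro Hk. apply Hn. exists (- INR k). intros a Da.
    apply Rnot_lt_le. intro Hl. apply Hk. exists a. auto. }
  destruct (choice' _ Hk) as [g Hgk].
  destruct (bw_vnorm n g M (fun k => HM _ (proj1 (Hgk k)))) as [phi [y [Hp Hc]]].
  destruct (Hg y 1 ltac:(lra)) as [del [Hdel Hd]].
  destruct (Hc (Rmin del 1) ltac:(apply Rmin_pos; lra)) as [N1 HN1].
  set (G := vnorm (f' y) + 1).
  assert (HG0 : 0 <= vnorm (f' y)) by apply vnorm_nonneg.
  destruct (INR_archimed 1 (G + 1 - f y) ltac:(lra)) as [N2 HN2].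
  set (k := max N1 N2).
  specialize (HN1 k ltac:(unfold k; lia)).
  assert (Hk1 : INR N2 <= INR (phi k)).
  { apply le_INR. assert (H := smono_ge _ Hp k). unfold k in *. lia. }
  destruct (Hgk (phi k)) as [Da Hfa].
  set (a := g (phi k)) in *.
  assert (Hm1 : vnorm (vsub a y) < del) by (eapply Rlt_le_trans; [exact HN1| apply Rmin_l]).
  assert (Hm2 : vnorm (vsub a y) <= 1) by (left; eapply Rlt_le_trans; [exact HN1| apply Rmin_r]).
  specialize (Hd a Hm1).
  assert (Hcs := cs_bound n (f' y) (vsub a y) G 1 ltac:(unfold G; lra) ltac:(lra) ltac:(unfold G; lra) Hm2).
  assert (h1 : -(f a - f y - dot (f' y) (vsub a y)) <= Rabs (f a - f y - dot (f' y) (vsub a y)))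
    by (rewrite <- Rabs_Ropp; apply Rle_abs).
  assert (h2 : -(dot (f' y) (vsub a y)) <= Rabs (dot (f' y) (vsub a y)))
    by (rewrite <- Rabs_Ropp; apply Rle_abs).
  lra.
Qed.

Lemma deriv_line n (f : vec n -> R) f' (Hg : forall x, has_gradient f x (f' x)) a d t :
  derivable_pt_lim (fun t => f (vadd a (vscale t d))) t (dot (f' (vadd a (vscale t d))) d).
Proof.
  intros eps He. set (p := vadd a (vscale t d)).
  assert (Hn0 := vnorm_nonneg n d). set (Nd := vnorm d + 1).
  destruct (Hg p (eps / (2 * Nd)) ltac:(apply Rdiv_lt_0_compat; unfold Nd; lra)) as [del [Hdel Hd]].
  assert (Hpos : 0 < del / Nd) by (apply Rdiv_lt_0_compat; unfold Nd; lra).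
  exists (mkposreal _ Hpos). intros h Hh0 Hh. simpl in Hh.
  assert (Heq : vsub (vadd a (vscale (t + h) d)) p = vscale h d).
  { apply functional_extensionality; intro i; unfold p, vsub, vadd, vscale; ring. }
  assert (Habs : 0 < Rabs h) by (apply Rabs_pos_lt; exact Hh0).
  assert (Hlt : Rabs h * Nd < del).
  { apply (Rmult_lt_compat_r Nd) in Hh; [|unfold Nd; lra].
    unfold Rdiv in Hh. rewrite Rmult_assoc, Rinv_l, Rmult_1_r in Hh by (unfold Nd; lra). exact Hh. }
  specialize (Hd (vadd a (vscale (t + h) d))). rewrite Heq, vnorm_scale, dot_scale_r in Hd.
  assert (Hle : Rabs h * vnorm d < del) by (unfold Nd in Hlt; nra).
  specialize (Hd Hle).
  set (X := f (vadd a (vscale (t + h) d)) - f p - h * dot (f' p) d) in *.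
  replace ((f (vadd a (vscale (t + h) d)) - f p) / h - dot (f' p) d)
    with (X / h) by (unfold X; field; exact Hh0).
  unfold Rdiv; rewrite Rabs_mult, Rabs_inv.
  assert (HX : Rabs X < eps * Rabs h).
  { eapply Rle_lt_trans; [exact Hd|].
    assert (Hq : eps / (2 * Nd) * (Rabs h * vnorm d) = eps * Rabs h * (vnorm d / (2 * Nd))) by (field; unfold Nd; lra).
    rewrite Hq.
    assert (vnorm d / (2 * Nd) < 1).
    { apply (Rmult_lt_reg_r (2 * Nd)); [unfold Nd; lra|].
      unfold Rdiv. rewrite Rmult_assoc, Rinv_l, Rmult_1_r by (unfold Nd; lra). unfold Nd; lra. }
    assert (0 < eps * Rabs h) by nra. nra. }
  apply (Rmult_lt_reg_r (Rabs h)); [exact Habs|].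
  rewrite Rmult_assoc, Rinv_l, Rmult_1_r by lra. exact HX.
Qed.

Lemma armijo n (D : vec n -> Prop) f f' M beta delta :
  (forall a, D a -> vnorm a <= M) -> set_convex D -> C1_with_gradient f f' ->
  0 < beta < 1 -> 0 < delta ->
  exists lb, 0 < lb /\ forall a z lam, D a -> D z -> delta <= dot (f' a) (vsub a z) ->
    0 < lam <= lb ->
    f (vadd a (vscale lam (vsub z a))) <= f a + beta * lam * dot (f' a) (vsub z a).
Proof.
  intros HM Hcv [Hg Hc] Hb Hdel.
  set (Md := 2 * (Rabs M + 1)).
  assert (HMd : 0 < Md) by (unfold Md; assert (0 <= Rabs M) by apply Rabs_pos; lra).
  assert (Hdz : forall a z, D a -> D z -> vnorm (vsub z a) < Md).
  { intros a z Da Dz. rewrite vsub_eq. unfold Md. apply weak_tri.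
    - assert (H := HM z Dz). assert (M <= Rabs M) by apply Rle_abs. lra.
    - rewrite vnorm_scale, Rabs_left by lra. assert (H := HM a Da).
      assert (M <= Rabs M) by apply Rle_abs. lra. }
  set (eps := (1 - beta) * delta / Md).
  assert (Heps : 0 < eps) by (unfold eps; apply Rdiv_lt_0_compat; nra).
  destruct (unif_cont n D f' M HM Hc eps Heps) as [eta [Heta Hu]].
  exists (Rmin (eta / Md) (1 / 2)). split.
  { apply Rmin_pos; [apply Rdiv_lt_0_compat|]; lra. }
  intros a z lam Da Dz Hd [Hl0 Hl1].
  set (d := vsub z a).
  assert (Hdd := Hdz a z Da Dz). fold d in Hdd.
  destruct (MVT_cor2 (fun t => f (vadd a (vscale t d))) (fun t => dot (f' (vadd a (vscale t d))) d) 0 lam Hl0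
     (fun c _ => deriv_line n f f' Hg a d c)) as [c [Hmvt [Hc0 Hc1]]].
  assert (Ha0 : vadd a (vscale 0 d) = a).
  { apply functional_extensionality; intro i; unfold vadd, vscale; ring. }
  rewrite Ha0 in Hmvt.
  set (p := vadd a (vscale c d)) in *.
  assert (Hlb1 : lam <= eta / Md) by (eapply Rle_trans; [exact Hl1| apply Rmin_l]).
  assert (Hlb2 : lam <= 1 / 2) by (eapply Rle_trans; [exact Hl1| apply Rmin_r]).
  assert (Dp : D p).
  { replace p with (vadd (vscale (1 - c) a) (vscale c z)).
    - apply Hcv; auto; lra.
    - apply functional_extensionality; intro i; unfold p, d, vadd, vscale, vsub; ring. }
  assert (Hpa : vnorm (vsub p a) < eta).
  { replace (vsub p a) with (vscale c d)
      by (apply functional_extensionality; intro i; unfold p, vadd, vscale, vsub; ring).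
    rewrite vnorm_scale, Rabs_right by lra.
    assert (Hn0 := vnorm_nonneg n d).
    assert (c * vnorm d <= c * Md) by (apply Rmult_le_compat_l; lra).
    assert (lam * Md <= eta).
    { apply (Rmult_le_compat_r Md) in Hlb1; [|lra]. unfold Rdiv in Hlb1.
      rewrite Rmult_assoc, Rinv_l, Rmult_1_r in Hlb1 by lra. exact Hlb1. }
    assert (c * Md < lam * Md) by (apply Rmult_lt_compat_r; lra).
    lra. }
  specialize (Hu p a Dp Da Hpa).
  assert (Hcs := cs_bound n (vsub (f' p) (f' a)) d eps Md Heps HMd (Rlt_le _ _ Hu) (Rlt_le _ _ Hdd)).
  rewrite dot_sub_l in Hcs.
  assert (HeM : eps * Md = (1 - beta) * delta) by (unfold eps; field; lra).
  assert (Hneg : dot (f' a) d = - dot (f' a) (vsub a z)).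
  { unfold d. replace (vsub z a) with (vscale (-1) (vsub a z))
      by (apply functional_extensionality; intro i; unfold vscale, vsub; ring).
    rewrite dot_scale_r. ring. }
  assert (Hb1 : dot (f' p) d - dot (f' a) d <= Rabs (dot (f' p) d - dot (f' a) d)) by apply Rle_abs.
  assert (Hgc : dot (f' p) d <= beta * dot (f' a) d) by nra.
  assert (lam * dot (f' p) d <= lam * (beta * dot (f' a) d)) by (apply Rmult_le_compat_l; lra).
  fold d. lra.
Qed.

Theorem proposition5p1 (n : nat) (D : vec n -> Prop) (f : vec n -> R)
  (f' : vec n -> vec n) (beta delta : R) (tau : nat -> R) (x0 : vec n)
  (x z : nat -> vec n) (lam : nat -> R) (l : nat -> nat) :
  set_nonempty D -> set_convex D -> set_closed D -> set_bounded D ->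
  C1_with_gradient f f' ->
  0 < beta < 1 ->
  0 < delta ->
  (forall j, 0 < tau j < 1) -> Un_cv tau 0 ->
  D x0 ->
  x 0%nat = x0 -> l 0%nat = 0%nat -> 0 < lam 0%nat <= tau 0%nat ->
  (forall k, delta <= mu D f' (x k) ->
     D (z k) /\ delta <= dot (f' (x k)) (vsub (x k) (z k)) /\
     x (S k) = vadd (x k) (vscale (lam k) (vsub (z k) (x k))) /\
     ((f (x (S k)) <= f (x k) + beta * lam k * dot (f' (x k)) (vsub (z k) (x k))
       /\ l (S k) = l k /\ lam k <= lam (S k) <= tau (l k))
      \/
      (~ (f (x (S k)) <= f (x k) + beta * lam k * dot (f' (x k)) (vsub (z k) (x k)))
       /\ l (S k) = S (l k) /\ 0 < lam (S k) <= Rmin (lam k) (tau (S (l k)))))) ->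
  exists k, mu D f' (x k) < delta.
Proof.
  intros Hne Hcv Hcl [M HM] HC1 Hb Hd Htau Htcv Dx0 Hx0 Hl0 Hlam0 Hstep.
  apply NNPP; intro Hn.
  assert (Hmu : forall k, delta <= mu D f' (x k)).
  { intro k; apply Rnot_lt_le; intro; apply Hn; eauto. }
  assert (Hs := fun k => Hstep k (Hmu k)). clear Hstep.
  set (A k := f (x (S k)) <= f (x k) + beta * lam k * dot (f' (x k)) (vsub (z k) (x k))).
  assert (Hinv : forall k, D (x k) /\ 0 < lam k /\ lam k <= tau (l k)).
  { induction k.
    - rewrite Hx0, Hl0. auto.
    - destruct IHk as [Dk [Hp Hle]]. specialize (Htau (l k)).
      destruct (Hs k) as [Dz [Hdz [Hx Hc]]].
      split.
      + rewrite Hx.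
        replace (vadd (x k) (vscale (lam k) (vsub (z k) (x k))))
          with (vadd (vscale (1 - lam k) (x k)) (vscale (lam k) (z k))).
        * apply Hcv; auto; lra.
        * apply functional_extensionality; intro i; unfold vadd, vscale, vsub; ring.
      + destruct Hc as [[Ha [Hl Hlm]] | [Ha [Hl Hlm]]]; rewrite Hl.
        * lra.
        * split; [lra|]. eapply Rle_trans; [apply Hlm| apply Rmin_r]. }
  destruct (armijo n D f f' M beta delta HM Hcv HC1 Hb Hd) as [lb [Hlb Harm]].
  destruct (Htcv lb Hlb) as [N HN].
  assert (Hfail : forall k, ~ A k -> (l k < N)%nat).
  { intros k HA. destruct (Compare_dec.le_lt_dec N (l k)) as [Hle|]; auto. exfalso. apply HA.
    specialize (HN (l k) Hle). unfold R_dist in HN. rewrite Rminus_0_r in HN.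
    destruct (Hinv k) as [Dk [Hp Hlt]]. destruct (Hs k) as [Dz [Hdz [Hx _]]].
    unfold A. rewrite Hx. apply Harm; auto. split; [lra|].
    assert (tau (l k) <= Rabs (tau (l k))) by apply Rle_abs. lra. }
  assert (Hmono1 : forall k, (l k <= l (S k))%nat).
  { intro k. destruct (Hs k) as [_ [_ [_ [[_ [Hl _]] | [_ [Hl _]]]]]]; lia. }
  assert (Hmono : forall k m, (l k <= l (k + m))%nat).
  { intros k m. induction m; [rewrite Nat.add_0_r; lia|]. rewrite Nat.add_succ_r.
    specialize (Hmono1 (k + m)%nat). lia. }
  assert (HK : exists K, forall k, (K <= k)%nat -> A k).
  { apply NNPP; intro HnK.
    assert (Hinf : forall K, exists k, (K <= k)%nat /\ ~ A k).
    { intro K. apply NNPP; intro H1. apply HnK. exists K. intros k Hk.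
      apply NNPP; intro H2. apply H1. eauto. }
    assert (Hj : forall j, exists k, (j <= l k)%nat).
    { induction j.
      - exists O. lia.
      - destruct IHj as [k Hk]. destruct (Hinf k) as [k' [Hk' HA]].
        exists (S k'). destruct (Hs k') as [_ [_ [_ [[Ha _] | [_ [Hl _]]]]]].
        + contradiction.
        + rewrite Hl. specialize (Hmono k (k' - k)%nat). replace (k + (k' - k))%nat with k' in Hmono by lia. lia. }
    destruct (Hj N) as [k Hk]. destruct (Hinf k) as [k' [Hk' HA]].
    specialize (Hfail k' HA). specialize (Hmono k (k' - k)%nat).
    replace (k + (k' - k))%nat with k' in Hmono by lia. lia. }
  destruct HK as [K HK].
  assert (Hcase : forall k, (K <= k)%nat ->
    f (x (S k)) <= f (x k) - beta * lam k * delta /\ lam k <= lam (S k)).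
  { intros k Hk. specialize (HK k Hk). unfold A in HK.
    destruct (Hs k) as [_ [Hdz [_ [[Ha [_ Hlm]] | [Ha _]]]]]; [|contradiction].
    assert (Hneg : dot (f' (x k)) (vsub (z k) (x k)) = - dot (f' (x k)) (vsub (x k) (z k))).
    { replace (vsub (z k) (x k)) with (vscale (-1) (vsub (x k) (z k)))
        by (apply functional_extensionality; intro i; unfold vscale, vsub; ring).
      rewrite dot_scale_r. ring. }
    destruct (Hinv k) as [_ [Hp _]].
    split; [|lra].
    assert (beta * lam k * delta <= beta * lam k * dot (f' (x k)) (vsub (x k) (z k))).
    { apply Rmult_le_compat_l; [nra| exact Hdz]. }
    rewrite Hneg in HK.
    replace (beta * lam k * - dot (f' (x k)) (vsub (x k) (z k)))
      with (-(beta * lam k * dot (f' (x k)) (vsub (x k) (z k)))) in HK by ring.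
    lra. }
  destruct (Hinv K) as [_ [HlK _]].
  set (c := beta * lam K * delta).
  assert (Hc : 0 < c) by (unfold c; apply Rmult_lt_0_compat; [nra| lra]).
  assert (Hdec : forall m : nat, lam K <= lam (K + m)%nat /\ f (x (K + m)%nat) <= f (x K) - INR m * c).
  { induction m.
    - rewrite Nat.add_0_r. simpl. lra.
    - destruct IHm as [IH1 IH2]. rewrite Nat.add_succ_r, S_INR.
      destruct (Hcase (K + m)%nat ltac:(lia)) as [H1 H2].
      assert (beta * lam K * delta <= beta * lam (K + m)%nat * delta).
      { apply Rmult_le_compat_r; [lra|]. apply Rmult_le_compat_l; lra. }
      unfold c in *. lra. }
  destruct (lower_bound n D f f' M HM HC1) as [m0 Hm0].
  destruct (INR_archimed c (f (x K) - m0) Hc) as [m Hm].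
  destruct (Hdec m) as [_ Hf]. specialize (Hm0 _ (proj1 (Hinv (K + m)%nat))). lra.
Qed.
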